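(* Let $T$ be a non-star tree and $x$ a vertex of $T$ with neighbors $x_1,\dots,x_n$, $n\ge 4$. Let $3\le p<n$ and let $T'$ be the connected component containing $x$ in $T-\{xx_i: i=1,\dots,p\}$. Suppose that at least two and at most $p-1$ of the trees $T_{(x_i,x)}$, $i=1,\dots,p$, are neighbor $F$-trees of $x$, and that for each remaining $i\in\{1,\dots,p\}$ (those with $T_{(x_i,x)}$ not a neighbor $F$-tree of $x$) there exists a $(T_{(x_i,x)},x_i)$-well 2-placement. If there exists a $(T',z)$-well 2-placement $\sigma'$ with $dist(x,\sigma'(x))\le 3$, where $z$ is a vertex of $T'$ (possibly $z=x$), then there exists a $(T,z)$-well 2-placement $\sigma$ with $\sigma(v)=\sigma'(v)$ for every $v\in V(T')$.
   Context: All graphs are finite, simple and undirected. A non-star tree is a tree not isomorphic to a star $K_{1,m}$ for any $m\ge0$. For an edge $ab$ of a tree $T$, $T_{(a,b)}$ denotes the connected component containing $a$ in $T-\{ab\}$; it is a neighbor $F$-tree of $b$ if it is a path with at most $3$ vertices and, when it has exactly $3$ vertices, $a$ is an end vertex of it. For a tree $S$, a permutation $\sigma$ of $V(S)$ is a 2-placement of $S$ if $\sigma(a)\sigma(b)\notin E(S)$ for every edge $ab\in E(S)$; $\sigma(S)\subseteq S^k$ means $dist_S(\sigma(a),\sigma(b))\le k$ for every edge $ab$ of $S$. For a non-star tree $S$ and vertex $w$, a fixed-point-free permutation $\sigma$ of $V(S)$ is an $(S,w)$-well 2-placement if (distances and degrees taken in $S$): (1) $\sigma$ is a 2-placement of $S$;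 (2) $\sigma(S)\subseteq S^6$; (3) $dist(w,\sigma(w))\le 2$; (4) $dist(y,\sigma(y))\le 3$ for every neighbor $y$ of $w$; (5) $dist(y,\sigma(y))\le 4$ for every $y$ of degree $1$; (6) every cycle of $\sigma$ (in its disjoint cycle decomposition) has length at most $5$. *)

(* Defs.v *)
(* A graph is a symmetric irreflexive relation e on a finType V;
   subgraphs are induced subgraphs on vertex sets S : {set V}. *)
From mathcomp Require Import all_boot all_order all_fingroup.
Set Implicit Arguments. Unset Strict Implicit. Unset Printing Implicit Defensive.

Section Defs.
Variable V : finType.
Variable e : rel V.

Definition ind (S : {set V}) : rel V :=
  [rel u v | [&& u \in S, v \in S & e u v]].

Definition deg (S : {set V}) (v : V) : nat := #|[set w in S | e v w]|.

(* the induced subgraph on S is a tree: nonempty, connected, |E| = |S| - 1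
   (edges counted as ordered pairs, hence the doubling) *)
Definition is_tree (S : {set V}) : bool :=
  [&& S != set0,
      [forall u in S, forall v in S, connect (ind S) u v] &
      #|[set q : V * V | ind S q.1 q.2]| == (#|S|).-1.*2].

(* isomorphic to a star K_{1,m}: some centre c lies on every edge *)
Definition is_star (S : {set V}) : bool :=
  [exists c in S, forall u in S, forall v in S, e u v ==> ((u == c) || (v == c))].

Definition nonstar_tree (S : {set V}) : bool := is_tree S && ~~ is_star S.

Definition is_path_graph (S : {set V}) : bool :=
  is_tree S && [forall v in S, deg S v <= 2].

Definition cut_comp (x : V) (X : {set V}) : {set V} :=
  [set v | connect [rel u w | e u w &&
       ~~ (((u == x) && (w \in X)) || ((w == x) && (u \in X)))] x v].

Definition branch (a b : V) : {set V} := cut_comp a [set b].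

Definition nbrF (a b : V) : bool :=
  let S := branch a b in
  [&& is_path_graph S, #|S| <= 3 & (#|S| == 3) ==> (deg S a <= 1)].

Definition dist_le (S : {set V}) (u v : V) (k : nat) : Prop :=
  u \in S /\ exists s : seq V, [&& path (ind S) u s, last u s == v & size s <= k].

(* sigma (a permutation of V(S), extended by the identity) is a 2-placement of S *)
Definition two_placement (S : {set V}) (s : {perm V}) : Prop :=
  perm_on S s /\ forall a b, ind S a b -> ~~ e (s a) (s b).

Definition well2 (S : {set V}) (w : V) (s : {perm V}) : Prop :=
  [/\ nonstar_tree S /\ w \in S,
      {in S, forall v, s v != v} /\ two_placement S s,
      (forall a b, ind S a b -> dist_le S (s a) (s b) 6) /\ dist_le S w (s w) 2,
      (forall y, ind S w y -> dist_le S y (s y) 3)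
        /\ (forall y, y \in S -> deg S y = 1 -> dist_le S y (s y) 4)
    & {in S, forall v, #|porbit s v| <= 5}].

End Defs.

(* Main.v *)
Require Import Defs.
From mathcomp Require Import all_boot all_order all_fingroup.
From mathcomp Require Import zify.
Set Implicit Arguments. Unset Strict Implicit. Unset Printing Implicit Defensive.

Section General.
Variable V : finType.
Variable e : rel V.
Hypothesis e_sym : symmetric e.

Lemma indT (u w : V) : ind e [set: V] u w = e u w.
Proof. by rewrite /ind /= !inE. Qed.

Lemma dist_mono (S : {set V}) (u v : V) k k' : k <= k' -> dist_le e S u v k -> dist_le e S u v k'.
Proof.
move=> kk [uS [s /and3P[ps ls sk]]]; split=> //; exists s.
by rewrite ps ls (leq_trans sk kk).
Qed.

Lemma dist_sub (S S' : {set V}) (u v : V) k : S \subset S' -> dist_le e S u v k -> dist_le e S' u v k.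
Proof.
move=> /subsetP sub [uS [s /and3P[ps ls sk]]]; split; first exact: sub.
exists s; rewrite ls sk andbT.
have H : subrel (ind e S) (ind e S') by move=> a b /and3P[aS bS eab]; rewrite /ind /= eab !sub.
by rewrite ?andbT (sub_path H ps).
Qed.

Lemma distT_trans (u v w : V) a b :
  dist_le e [set: V] u v a -> dist_le e [set: V] v w b -> dist_le e [set: V] u w (a + b).
Proof.
move=> [_ [s1 /and3P[p1 /eqP l1 k1]]] [_ [s2 /and3P[p2 /eqP l2 k2]]].
split; first by rewrite inE. exists (s1 ++ s2).
by rewrite cat_path p1 last_cat l1 p2 l2 eqxx size_cat leq_add.
Qed.

Lemma distT_sym (u v : V) k : dist_le e [set: V] u v k -> dist_le e [set: V] v u k.
Proof.
move=> [_ [s /and3P[ps /eqP ls sk]]]; split; first by rewrite inE.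
exists (rev (belast u s)).
rewrite -ls rev_path; apply/and3P; split.
- have H : subrel (ind e [set: V]) (fun z => (ind e [set: V])^~ z).
    by move=> a b; rewrite /ind /= !inE /= e_sym.
  by rewrite ?andbT (sub_path H ps).
- case: s {ps ls sk} => //= y s; rewrite rev_cons last_rcons //.
- by rewrite size_rev size_belast.
Qed.

Lemma distT_edge (u v : V) : e u v -> dist_le e [set: V] u v 1.
Proof. move=> euv; split; first by rewrite inE. by exists [:: v]; rewrite /= /ind /= !inE euv eqxx. Qed.

Lemma distT_refl (u : V) : dist_le e [set: V] u u 0.
Proof. split; first by rewrite inE. by exists [::]; rewrite /= eqxx. Qed.

Lemma porbit_le (s : {perm V}) v k : 0 < k -> iter k s v = v -> #|porbit s v| <= k.
Proof.
move=> k0 itk.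
have sub : porbit s v \subset traject s v k; last first.
  apply: leq_trans (subset_leq_card sub) _.
  by apply: leq_trans (card_size _) _; rewrite size_traject.
apply/subsetP => y /porbitP [i ->].
rewrite permX; apply/trajectP; exists (i %% k); first by rewrite ltn_mod.
rewrite {1}(divn_eq i k) addnC iterD.
suff -> : iter (i %/ k * k) s v = v by [].
elim: (i %/ k) => [//|q IH]; by rewrite mulSn iterD IH itk.
Qed.

Lemma porbit_agree (s t : {perm V}) (A : {set V}) v :
  perm_on A t -> v \in A -> {in A, forall u, s u = t u} -> porbit s v = porbit t v.
Proof.
move=> tA vA st.
have H : forall i, iter i s v = iter i t v /\ iter i t v \in A.
  elim=> [|i [IH1 IH2]] //=; rewrite IH1 st // perm_closed //.
apply/porbit_setP => y; apply/porbitP/porbitP => -[i ->]; exists i;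
  by rewrite !permX (H i).1.
Qed.

End General.

Section LB.
Variable V : finType.
Variable r : rel V.
Hypothesis r_sym : symmetric r.
Variable R : {set V}.
Hypothesis cover : forall v, exists2 rho, rho \in R & connect r rho v.

Fixpoint nb (m : nat) : {set V} :=
  if m is m'.+1 then nb m' :|: [set w | [exists u in nb m', r u w]] else R.

Lemma nb_mono m m' : m <= m' -> nb m \subset nb m'.
Proof.
move=> le; rewrite -(subnKC le); elim: (m' - m) => [|d IH]; first by rewrite addn0.
by rewrite addnS /=; apply: subset_trans IH (subsetUl _ _).
Qed.

Lemma nb_path rho m s : rho \in nb m -> path r rho s -> last rho s \in nb (m + size s).
Proof.
elim: s rho m => [|y s IH] rho m /=; first by rewrite addn0.
move=> rm /andP[ry ps]; rewrite addnS -addSn; apply: IH ps.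
by rewrite /= !inE; apply/orP; right; apply/existsP; exists rho; rewrite rm ry.
Qed.

Lemma nb_ex v : exists m, v \in nb m.
Proof.
have [rho rR /connectP [s ps ->]] := cover v.
by exists (0 + size s); apply: nb_path.
Qed.

Definition dd v := ex_minn (nb_ex v).

Lemma dd_min v m : v \in nb m -> dd v <= m.
Proof. by rewrite /dd; case: ex_minnP => m' _ H /H. Qed.

Lemma par_ex v : v \notin R -> exists u, r u v && (dd u < dd v).
Proof.
move=> vR; rewrite /dd; case: ex_minnP => [[|m] vm mmin].
  by rewrite /= (negbTE vR) in vm.
move: vm; rewrite /= inE => /orP[vm|]; first by have := mmin _ vm; rewrite ltnn.
rewrite inE => /existsP[u /andP[um ruv]]; exists u; rewrite ruv /=.
by rewrite ltnS dd_min.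
Qed.

Definition par v := odflt v [pick u | r u v && (dd u < dd v)].

Lemma par_spec v : v \notin R -> r (par v) v && (dd (par v) < dd v).
Proof.
move=> vR; rewrite /par; case: pickP => [u //|H].
by have [u] := par_ex vR; rewrite H.
Qed.

Lemma LB : (#|V| - #|R|).*2 <= #|[set q : V * V | r q.1 q.2]|.
Proof.
set N := ~: R.
pose f1 v := (par v, v); pose f2 v := (v, par v).
have i1 : injective f1 by move=> a b [].
have i2 : injective f2 by move=> a b [].
have sub : f1 @: N :|: f2 @: N \subset [set q : V * V | r q.1 q.2].
  apply/subsetP => q; rewrite !inE => /orP[] /imsetP[v]; rewrite inE => vR ->;
  have /andP[h _] := par_spec vR; by rewrite //= r_sym.
have dis : f1 @: N :&: f2 @: N = set0.
  apply/setP => q; rewrite !inE; apply/negP => /andP[/imsetP[v vN ->]].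
  move=> /imsetP[w wN [e1 e2]].
  rewrite /N !inE in vN wN.
  have := par_spec vN; have := par_spec wN => /andP[_ h1] /andP[_ h2].
  rewrite -e2 in h1; rewrite e1 in h2.
  by move: (ltn_trans h1 h2); rewrite ltnn.
have := subset_leq_card sub; rewrite cardsU dis cards0 subn0 !card_imset //.
by rewrite -addnn /N cardsCs setCK.
Qed.

End LB.


Definition mtbl (sz : seq nat) : seq ((nat * nat) * (nat * nat)) :=
  match sz with
  | [:: 1; 1] => [:: (0,1,(1,1)); (1,1,(0,1))]
  | [:: 1; 2] => [:: (0,1,(1,1)); (1,1,(1,2)); (1,2,(0,1))]
  | [:: 1; 3] => [:: (0,1,(1,2)); (1,1,(0,1)); (1,2,(1,3)); (1,3,(1,1))]
  | [:: 2; 1] => [:: (0,1,(0,2)); (0,2,(1,1)); (1,1,(0,1))]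
  | [:: 2; 2] => [:: (0,1,(0,2)); (0,2,(1,1)); (1,1,(1,2)); (1,2,(0,1))]
  | [:: 2; 3] => [:: (0,1,(0,2)); (0,2,(1,2)); (1,1,(0,1)); (1,2,(1,3)); (1,3,(1,1))]
  | [:: 3; 1] => [:: (0,1,(1,1)); (0,2,(0,3)); (0,3,(0,1)); (1,1,(0,2))]
  | [:: 3; 2] => [:: (0,1,(1,1)); (0,2,(0,3)); (0,3,(0,1)); (1,1,(1,2)); (1,2,(0,2))]
  | [:: 3; 3] => [:: (0,1,(0,2)); (0,2,(1,3)); (0,3,(1,1)); (1,1,(1,2)); (1,2,(0,3)); (1,3,(0,1))]
  | [:: 1; 1; 1] => [:: (0,1,(1,1)); (1,1,(2,1)); (2,1,(0,1))]
  | [:: 1; 1; 2] => [:: (0,1,(1,1)); (1,1,(2,1)); (2,1,(2,2)); (2,2,(0,1))]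
  | [:: 1; 1; 3] => [:: (0,1,(1,1)); (1,1,(2,2)); (2,1,(0,1)); (2,2,(2,3)); (2,3,(2,1))]
  | [:: 1; 2; 1] => [:: (0,1,(1,1)); (1,1,(0,1)); (1,2,(2,1)); (2,1,(1,2))]
  | [:: 1; 2; 2] => [:: (0,1,(1,1)); (1,1,(0,1)); (1,2,(2,1)); (2,1,(2,2)); (2,2,(1,2))]
  | [:: 1; 2; 3] => [:: (0,1,(1,1)); (1,1,(0,1)); (1,2,(2,2)); (2,1,(1,2)); (2,2,(2,3)); (2,3,(2,1))]
  | [:: 1; 3; 1] => [:: (0,1,(1,1)); (1,1,(0,1)); (1,2,(1,3)); (1,3,(2,1)); (2,1,(1,2))]
  | [:: 1; 3; 2] => [:: (0,1,(1,1)); (1,1,(0,1)); (1,2,(1,3)); (1,3,(2,1)); (2,1,(2,2)); (2,2,(1,2))]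
  | [:: 1; 3; 3] => [:: (0,1,(1,1)); (1,1,(1,2)); (1,2,(2,3)); (1,3,(2,1)); (2,1,(2,2)); (2,2,(1,3)); (2,3,(0,1))]
  | [:: 2; 1; 1] => [:: (0,1,(0,2)); (0,2,(1,1)); (1,1,(2,1)); (2,1,(0,1))]
  | [:: 2; 1; 2] => [:: (0,1,(0,2)); (0,2,(1,1)); (1,1,(2,1)); (2,1,(2,2)); (2,2,(0,1))]
  | [:: 2; 1; 3] => [:: (0,1,(0,2)); (0,2,(2,1)); (1,1,(2,2)); (2,1,(0,1)); (2,2,(2,3)); (2,3,(1,1))]
  | [:: 2; 2; 1] => [:: (0,1,(0,2)); (0,2,(1,1)); (1,1,(0,1)); (1,2,(2,1)); (2,1,(1,2))]
  | [:: 2; 2; 2] => [:: (0,1,(0,2)); (0,2,(1,1)); (1,1,(0,1)); (1,2,(2,1)); (2,1,(2,2)); (2,2,(1,2))]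
  | [:: 2; 2; 3] => [:: (0,1,(0,2)); (0,2,(1,1)); (1,1,(0,1)); (1,2,(2,2)); (2,1,(1,2)); (2,2,(2,3)); (2,3,(2,1))]
  | [:: 2; 3; 1] => [:: (0,1,(0,2)); (0,2,(1,1)); (1,1,(0,1)); (1,2,(1,3)); (1,3,(2,1)); (2,1,(1,2))]
  | [:: 2; 3; 2] => [:: (0,1,(0,2)); (0,2,(1,1)); (1,1,(0,1)); (1,2,(1,3)); (1,3,(2,1)); (2,1,(2,2)); (2,2,(1,2))]
  | [:: 2; 3; 3] => [:: (0,1,(0,2)); (0,2,(1,1)); (1,1,(1,2)); (1,2,(2,3)); (1,3,(2,1)); (2,1,(2,2)); (2,2,(1,3)); (2,3,(0,1))]
  | [:: 3; 1; 1] => [:: (0,1,(1,1)); (0,2,(0,3)); (0,3,(0,1)); (1,1,(2,1)); (2,1,(0,2))]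
  | [:: 3; 1; 2] => [:: (0,1,(1,1)); (0,2,(0,3)); (0,3,(2,1)); (1,1,(0,1)); (2,1,(2,2)); (2,2,(0,2))]
  | [:: 3; 1; 3] => [:: (0,1,(0,2)); (0,2,(2,3)); (0,3,(1,1)); (1,1,(2,1)); (2,1,(2,2)); (2,2,(0,3)); (2,3,(0,1))]
  | [:: 3; 2; 1] => [:: (0,1,(1,1)); (0,2,(0,3)); (0,3,(0,1)); (1,1,(0,2)); (1,2,(2,1)); (2,1,(1,2))]
  | [:: 3; 2; 2] => [:: (0,1,(1,1)); (0,2,(0,3)); (0,3,(0,1)); (1,1,(0,2)); (1,2,(2,1)); (2,1,(2,2)); (2,2,(1,2))]
  | [:: 3; 2; 3] => [:: (0,1,(0,2)); (0,2,(2,3)); (0,3,(1,1)); (1,1,(1,2)); (1,2,(2,1)); (2,1,(2,2)); (2,2,(0,3)); (2,3,(0,1))]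
  | [:: 3; 3; 1] => [:: (0,1,(0,2)); (0,2,(1,3)); (0,3,(1,1)); (1,1,(1,2)); (1,2,(0,3)); (1,3,(2,1)); (2,1,(0,1))]
  | [:: 3; 3; 2] => [:: (0,1,(0,2)); (0,2,(1,3)); (0,3,(1,1)); (1,1,(1,2)); (1,2,(0,3)); (1,3,(2,1)); (2,1,(2,2)); (2,2,(0,1))]
  | [:: 3; 3; 3] => [:: (0,1,(0,2)); (0,2,(1,3)); (0,3,(2,1)); (1,1,(1,2)); (1,2,(2,3)); (1,3,(0,1)); (2,1,(2,2)); (2,2,(0,3)); (2,3,(1,1))]
  | _ => [::]
  end.

Definition mt (sz : seq nat) (td : nat * nat) : nat * nat :=
  head td [seq q.2 | q <- mtbl sz & q.1 == td].

Definition mvs (sz : seq nat) : seq (nat * nat) :=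
  flatten [seq [seq (t, d) | d <- iota 1 (nth 0 sz t)] | t <- iota 0 (size sz)].

Definition mvalid (sz : seq nat) (td : nat * nat) : bool :=
  (td.1 < size sz) && (0 < td.2 <= nth 0 sz td.1).

Definition mchk (sz : seq nat) : bool :=
  [&& all (fun td => mvalid sz (mt sz td)) (mvs sz),
      all (fun a => all (fun b => (mt sz a == mt sz b) ==> (a == b)) (mvs sz)) (mvs sz),
      all (fun td => mt sz td != td) (mvs sz),
      all (fun td => (td.2 < nth 0 sz td.1) ==>
            let a := mt sz td in let b := mt sz (td.1, td.2.+1) in
            ~~ ((a.1 == b.1) && ((a.2 == b.2.+1) || (b.2 == a.2.+1)))) (mvs sz),
      all (fun td => (td.2 == 1) ==> ((mt sz td).2 <= 2)) (mvs sz),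
      all (fun td => (td.2 == nth 0 sz td.1) ==> (td.2 + (mt sz td).2 <= 4)) (mvs sz)
    & all (fun td => has (fun k => iter k (mt sz) td == td) [:: 1; 2; 3; 4; 5]) (mvs sz)].

Lemma mchk_ok (sz : seq nat) : (size sz == 2) || (size sz == 3) ->
  all (fun s => (0 < s <= 3)) sz -> mchk sz.
Proof.
case: sz => [|a [|b [|c [|d l]]]] //= _;
  case: a => [|[|[|[|a]]]] //; case: b => [|[|[|[|b]]]] //;
  try (case: c => [|[|[|[|c]]]] //); by [].
Qed.

Lemma mem_mvs sz m : (m \in mvs sz) = mvalid sz m.
Proof.
case: m => t d; rewrite /mvs /mvalid /=; apply/flatten_mapP/andP => [[t' ] | [ht hd]].
  rewrite mem_iota add0n => /andP[_ ht] /mapP [d' ]; rewrite mem_iota => hd [-> ->].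
  by split=> //; move: hd; rewrite add1n ltnS.
exists t; first by rewrite mem_iota add0n.
by apply/mapP; exists d => //; rewrite mem_iota add1n ltnS.
Qed.

Section ModelFacts.
Variable sz : seq nat.
Hypothesis szs : (size sz == 2) || (size sz == 3).
Hypothesis sze : all (fun s => (0 < s <= 3)) sz.

Let ck := mchk_ok szs sze.

Lemma mvalid_le3 m : mvalid sz m -> 0 < m.2 <= 3.
Proof.
case/andP => ht /andP[h1 h2]; rewrite h1 /=; apply: leq_trans h2 _.
by move/allP: sze => /(_ (nth 0 sz m.1) (mem_nth 0 ht)) /andP[].
Qed.

Lemma mt_valid m : mvalid sz m -> mvalid sz (mt sz m).
Proof. by move: ck => /and4P[/allP h _ _ /and4P[_ _ _ _]]; rewrite -mem_mvs => /h. Qed.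

Lemma mt_inj m1 m2 : mvalid sz m1 -> mvalid sz m2 -> mt sz m1 = mt sz m2 -> m1 = m2.
Proof.
move: ck => /and4P[_ /allP h _ /and4P[_ _ _ _]]; rewrite -!mem_mvs => v1 v2 e12.
by move: (h _ v1) => /allP /(_ _ v2); rewrite e12 eqxx => /eqP.
Qed.

Lemma mt_nfix m : mvalid sz m -> mt sz m != m.
Proof. by move: ck => /and4P[_ _ /allP h /and4P[_ _ _ _]]; rewrite -mem_mvs => /h. Qed.

Lemma mt_adj t d : mvalid sz (t, d) -> d < nth 0 sz t ->
  let a := mt sz (t, d) in let b := mt sz (t, d.+1) in
  ~~ ((a.1 == b.1) && ((a.2 == b.2.+1) || (b.2 == a.2.+1))).
Proof.
by move: ck => /and4P[_ _ _ /and4P[/allP h _ _ _]]; rewrite -mem_mvs => /h /= /implyP; apply.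
Qed.

Lemma mt_d1 m : mvalid sz m -> m.2 = 1 -> (mt sz m).2 <= 2.
Proof.
by move: ck => /and4P[_ _ _ /and4P[_ /allP h _ _]]; rewrite -mem_mvs => /h /implyP H /eqP /H.
Qed.

Lemma mt_leaf m : mvalid sz m -> m.2 = nth 0 sz m.1 -> m.2 + (mt sz m).2 <= 4.
Proof.
by move: ck => /and4P[_ _ _ /and4P[_ _ /allP h _]]; rewrite -mem_mvs => /h /implyP H /eqP /H.
Qed.

Lemma mt_cyc m : mvalid sz m -> exists2 k, 0 < k <= 5 & iter k (mt sz) m = m.
Proof.
move: ck => /and4P[_ _ _ /and4P[_ _ _ /allP h]]; rewrite -mem_mvs => /h /hasP [k kin /eqP h2]; exists k => //.
by move: kin; rewrite !inE => /orP[/eqP->|/orP[/eqP->|/orP[/eqP->|/orP[/eqP->|/eqP->]]]].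
Qed.

End ModelFacts.


Lemma closedP (V : finType) (r : rel V) (A : {set V}) a b :
  (forall u w, u \in A -> r u w -> w \in A) -> a \in A -> connect r a b -> b \in A.
Proof.
move=> cl aA /connectP [s ps ->]; elim: s a aA ps => [//|y s IH] a aA /= /andP[ay ps].
exact: IH (cl _ _ aA ay) ps.
Qed.

Section Main.
Variable V : finType.
Variable e : rel V.
Hypothesis e_sym : symmetric e.
Hypothesis e_irr : irreflexive e.
Hypothesis T_tree : is_tree e [set: V].
Variable x : V.
Variable n : nat.
Variable xs : 'I_n -> V.
Hypothesis xs_inj : injective xs.
Hypothesis xs_nbr : forall v, e x v <-> exists i, xs i = v.
Variable p : nat.

Definition P := [set xs i | i : 'I_n & i < p].
Definition ep := [rel u w | e u w && ~~ (((u == x) && (w \in P)) || ((w == x) && (u \in P)))].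
Definition C (a : V) := [set v | connect ep a v].
Definition R0 := x |: P.

Lemma Tp_eq : cut_comp e x P = C x.
Proof. by []. Qed.

Lemma ep_sym : symmetric ep.
Proof. by move=> u w; rewrite /ep /= e_sym orbC. Qed.

Lemma ep_e u w : ep u w -> e u w.
Proof. by case/andP. Qed.

Lemma nep u w : e u w -> ~~ ep u w -> ((u == x) && (w \in P)) || ((w == x) && (u \in P)).
Proof. by rewrite /ep /= => ->; rewrite negbK. Qed.

Lemma inP v : v \in P -> exists2 i : 'I_n, i < p & v = xs i.
Proof. by case/imsetP => i; rewrite inE => ip ->; exists i. Qed.

Lemma xsP (i : 'I_n) : i < p -> xs i \in P.
Proof. by move=> ip; apply/imsetP; exists i; rewrite ?inE. Qed.

Lemma e_x_xs (i : 'I_n) : e x (xs i).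
Proof. by apply/xs_nbr; exists i. Qed.

Lemma xs_neq_x (i : 'I_n) : xs i != x.
Proof. by apply/eqP => h; have := e_x_xs i; rewrite h e_irr. Qed.

Lemma xnP : x \notin P.
Proof. by apply/negP => /inP [i _ h]; have := xs_neq_x i; rewrite -h eqxx. Qed.

Lemma connT v : connect e x v.
Proof.
have := T_tree; rewrite /is_tree => /and3P[_ /forallP /(_ x) /implyP /(_ (in_setT x))].
move=> /forallP /(_ v) /implyP /(_ (in_setT v)) h _.
apply: connect_sub h => a b; rewrite /ind /= => /and3P[_ _ ab]; exact: connect1.
Qed.

Lemma cover0 v : exists2 rho, rho \in R0 & connect ep rho v.
Proof.
have H : forall s a, (exists2 rho, rho \in R0 & connect ep rho a) ->
    path e a s -> exists2 rho, rho \in R0 & connect ep rho (last a s).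
  elim=> [|y s IH] a //= [rho rR ra] /andP[ay ps]; apply: IH ps.
  case ep_ay : (ep a y); first by exists rho => //; apply: (connect_trans ra); apply: connect1.
  have := nep ay (negbT ep_ay) => /orP[] /andP[/eqP ax yP].
    by exists y; rewrite ?connect0 // /R0 inE yP orbT.
  by exists y; rewrite ?connect0 // ax /R0 setU11.
have /connectP [s ps ->] := connT v.
by apply: H ps; exists x; rewrite ?setU11 ?connect0.
Qed.

Lemma card_ep : #|[set q : V * V | ep q.1 q.2]| + (#|P|).*2 <= (#|V|).-1.*2.
Proof.
have := T_tree; rewrite /is_tree => /and3P[_ _ /eqP cE]; rewrite cardsT in cE.
rewrite -cE.
set D1 := [set (x, y) | y in P]; set D2 := [set (y, x) | y in P].
have c1 : #|D1| = #|P| by rewrite card_imset // => a b [].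
have c2 : #|D2| = #|P| by rewrite card_imset // => a b [].
have d12 : D1 :&: D2 = set0.
  apply/setP => q; rewrite !inE; apply/negP => /andP[/imsetP[a aP ->] /imsetP[b bP [h1 h2]]].
  by move: xnP; rewrite -h2 aP.
set E := [set q : V * V | ep q.1 q.2].
have dE : E :&: (D1 :|: D2) = set0.
  apply/setP => q; rewrite !inE; apply/negP => /andP[epq /orP[] /imsetP[a aP eq]];
  by move: epq; rewrite eq /ep /= aP eqxx /= ?andbF ?orbT ?andbF.
have sub : E :|: (D1 :|: D2) \subset [set q : V * V | ind e [set: V] q.1 q.2].
  apply/subsetP => q; rewrite !inE => /orP[/ep_e|/orP[] /imsetP[a aP ->]];
    rewrite /ind /= ?inE //=.
    have [i _ ->] := inP aP; exact: e_x_xs.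
  have [i _ ->] := inP aP; rewrite e_sym; exact: e_x_xs.
have := subset_leq_card sub; rewrite cardsU dE cards0 subn0 cardsU d12 cards0 subn0 c1 c2.
by rewrite addnn.
Qed.

Lemma roots_sep rho1 rho2 : rho1 \in R0 -> rho2 \in R0 -> rho1 != rho2 -> ~~ connect ep rho1 rho2.
Proof.
move=> r1 r2 r12; apply/negP => c12.
set R' := R0 :\ rho2.
have cov : forall v, exists2 rho, rho \in R' & connect ep rho v.
  move=> v; have [rho rR rv] := cover0 v.
  case: (eqVneq rho rho2) => [erho|nrho].
    by exists rho1; [rewrite in_setD1 r12 r1 | apply: (connect_trans c12); rewrite -erho].
  by exists rho; rewrite // in_setD1 nrho rR.
have := LB ep_sym cov.
have cR0 : #|R0| = #|P|.+1 by rewrite /R0 cardsU1 xnP.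
have cR' : #|R'| = #|P| by move: (cardsD1 rho2 R0); rewrite r2 cR0 add1n => -[].
have cV : #|R0| <= #|V| by apply: max_card.
have := card_ep; rewrite cR' -!mul2n -subn1; move: cV; rewrite cR0.
move: #|[set q | ep q.1 q.2]| #|V| #|P| => k a b; lia.
Qed.

Lemma Csym a v : (v \in C a) = connect ep v a.
Proof. by rewrite /C inE (sym_connect_sym ep_sym). Qed.

Lemma C_disj a b v : a \in R0 -> b \in R0 -> a != b -> v \in C a -> v \notin C b.
Proof.
move=> aR bR ab va; apply/negP => vb; apply: (negP (roots_sep aR bR ab)).
rewrite /C !inE in va vb; apply: (connect_trans va); by rewrite (sym_connect_sym ep_sym).
Qed.

Lemma C_self a : a \in C a.
Proof. by rewrite inE connect0. Qed.

Lemma C_closed a u w : u \in C a -> ep u w -> w \in C a.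
Proof. by rewrite !inE => ua uw; apply: (connect_trans ua); apply: connect1. Qed.

Lemma xR0 : x \in R0.
Proof. by rewrite /R0 setU11. Qed.

Lemma xsR0 (i : 'I_n) : i < p -> xs i \in R0.
Proof. by move=> ip; rewrite /R0 inE xsP ?orbT. Qed.

Lemma B_eq (i : 'I_n) : i < p -> branch e (xs i) x = C (xs i).
Proof.
move=> ip; apply/setP => v; rewrite /branch /cut_comp /C !inE; apply/idP/idP.
  move=> hc; suff: v \in C (xs i) by rewrite inE.
  apply: (closedP _ (C_self (xs i)) hc) => u w uC /andP[euw h].
  case epuw : (ep u w); first by apply: C_closed uC epuw.
  have := nep euw (negbT epuw) => /orP[] /andP[/eqP ux wP].
    have := C_disj (xsR0 ip) xR0 (xs_neq_x i) uC; by rewrite -ux C_self.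
  have [j jp uj] := inP wP.
  have nij : xs i != xs j.
    by apply: contra h => /eqP ij; rewrite uj -ij eqxx ux inE eqxx.
  have := C_disj (xsR0 ip) (xsR0 jp) nij uC; by rewrite uj C_self.
apply: connect_sub => a b ab; apply: connect1.
rewrite /= (ep_e ab) /=; apply/negP => /orP[] /andP[/eqP ai]; rewrite inE => /eqP bx;
  move: ab; rewrite /ep /= ai bx eqxx xsP //= ?andbF ?orbT //= ?andbF //.
Qed.


Lemma part_cover v : v \in C x \/ exists2 i : 'I_n, i < p & v \in C (xs i).
Proof.
have [rho] := cover0 v; rewrite /R0 !inE => /orP[/eqP -> xv|rP rv].
  by left.
by right; have [i ip ri] := inP rP; exists i; rewrite // /C inE -ri.
Qed.

Lemma C_xs_inj (i j : 'I_n) v : i < p -> j < p -> v \in C (xs i) -> v \in C (xs j) -> i = j.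
Proof.
move=> ip jp vi vj; case: (eqVneq (xs i) (xs j)) => [/xs_inj //|nij].
by have := C_disj (xsR0 ip) (xsR0 jp) nij vi; rewrite vj.
Qed.

Lemma C_x_xs (i : 'I_n) v : i < p -> v \in C (xs i) -> v \notin C x.
Proof. by move=> ip; apply: C_disj (xsR0 ip) xR0 (xs_neq_x i). Qed.

Lemma x_notin_B (i : 'I_n) : i < p -> x \notin C (xs i).
Proof. by move=> ip; apply/negP => h; have := C_x_xs ip h; rewrite C_self. Qed.

Lemma P_in_B (i j : 'I_n) : i < p -> j < p -> xs j \in C (xs i) -> j = i.
Proof. by move=> ip jp h; apply: (C_xs_inj jp ip (C_self _) h). Qed.

Lemma P_notin_T v : v \in P -> v \notin C x.
Proof. by case/inP => i ip ->; apply: C_x_xs ip (C_self _). Qed.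

Lemma edge_B (i : 'I_n) u w : i < p -> u \in C (xs i) -> w \notin C (xs i) -> e u w ->
  u = xs i /\ w = x.
Proof.
move=> ip uB wB euw; case epuw : (ep u w); first by rewrite (C_closed uB epuw) in wB.
have := nep euw (negbT epuw) => /orP[] /andP[/eqP ux wP].
  by move: (x_notin_B ip); rewrite -ux uB.
have [j jp uj] := inP wP; split=> //; rewrite uj in uB *.
by rewrite (P_in_B ip jp uB).
Qed.

Lemma edge_T u w : u \in C x -> w \notin C x -> e u w -> u = x /\ w \in P.
Proof.
move=> uT wT euw; case epuw : (ep u w); first by rewrite (C_closed uT epuw) in wT.
have := nep euw (negbT epuw) => /orP[] /andP[/eqP ux wP] //.
by move: (P_notin_T wP); rewrite uT.
Qed.

Lemma edge_BB (i j : 'I_n) u w : i < p -> j < p -> u \in C (xs i) -> w \in C (xs j) ->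
  e u w -> i = j.
Proof.
move=> ip jp ui wj euw; case: (boolP (w \in C (xs i))) => wi.
  exact: C_xs_inj ip jp wi wj.
have [_ wx] := edge_B ip ui wi euw; by move: (x_notin_B jp); rewrite -wx wj.
Qed.

Lemma deg_T v : v \in C x -> v != x -> deg e [set: V] v = deg e (C x) v.
Proof.
move=> vT vx; rewrite /deg; apply: eq_card => w; rewrite !inE.
case evw : (e v w); rewrite ?andbF ?andbT //.
apply/esym/negPn/negP => wT; have wT' : w \notin C x by rewrite /C inE.
by have [h _] := edge_T vT wT' evw; rewrite h eqxx in vx.
Qed.

Lemma deg_B (i : 'I_n) v : i < p -> v \in C (xs i) -> v != xs i ->
  deg e [set: V] v = deg e (C (xs i)) v.
Proof.
move=> ip vB vx; rewrite /deg; apply: eq_card => w; rewrite !inE.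
case evw : (e v w); rewrite ?andbF ?andbT //.
apply/esym/negPn/negP => wB; have wB' : w \notin C (xs i) by rewrite /C inE.
by have [h _] := edge_B ip vB wB' evw; rewrite h eqxx in vx.
Qed.

Hypothesis n_ge2 : 2 <= n.

Lemma deg_x : 2 <= deg e [set: V] x.
Proof.
have h0 : 0 < n by apply: leq_trans n_ge2.
pose o0 := Ordinal h0; pose o1 := Ordinal n_ge2.
have ne : xs o0 != xs o1 by rewrite (inj_eq xs_inj).
have : [set xs o0; xs o1] \subset [set w in [set: V] | e x w].
  by apply/subsetP => w; rewrite !inE => /orP[] /eqP ->; rewrite e_x_xs.
by move/subset_leq_card; rewrite cards2 ne.
Qed.

Definition Good (A : {set V}) (s : {perm V}) : Prop :=
 [/\ perm_on A s /\ {in A, forall v, s v != v},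
     (forall u w, u \in A -> w \in A -> ep u w ->
        ~~ e (s u) (s w) /\ dist_le e [set: V] (s u) (s w) 6),
     (forall v, v \in A -> v \in P ->
        dist_le e [set: V] v (s v) 3 /\ dist_le e [set: V] x (s v) 3),
     (forall v, v \in A -> deg e [set: V] v = 1 -> dist_le e [set: V] v (s v) 4) &
     {in A, forall v, #|porbit s v| <= 5}].

Lemma Good0 : Good set0 1.
Proof. by split; first split; rewrite ?perm_on1 // => u; rewrite inE. Qed.

Lemma Good_comb A1 A2 s1 s2 : A1 :&: A2 = set0 ->
  (forall u w, u \in A1 -> w \in A2 -> ~~ ep u w) ->
  Good A1 s1 -> Good A2 s2 -> Good (A1 :|: A2) (s1 * s2)%g.
Proof.
move=> dis sep [[p1 f1] a1 d1 l1 o1] [[p2 f2] a2 d2 l2 o2].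
have n12 : forall v, v \in A1 -> v \notin A2.
  by move=> v v1; apply/negP => v2; move/setP: dis => /(_ v); rewrite !inE v1 v2.
have e1 : {in A1, forall v, (s1 * s2)%g v = s1 v}.
  by move=> v v1; rewrite permM (out_perm p2) // n12 // perm_closed.
have e2 : {in A2, forall v, (s1 * s2)%g v = s2 v}.
  move=> v v2; rewrite permM (out_perm p1) //; by apply/negP => v1; move: (n12 _ v1); rewrite v2.
split; first split.
- apply: perm_onM; apply: subset_trans (p1) _ || apply: subset_trans (p2) _;
    by rewrite ?subsetUl ?subsetUr.
- by move=> v; rewrite inE => /orP[v1|v2]; [rewrite e1 // f1 | rewrite e2 // f2].
- move=> u w; rewrite !inE => /orP[u1|u2] /orP[w1|w2] uw.
  + by rewrite !e1 //; apply: a1.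
  + by exfalso; move: (sep _ _ u1 w2) => /negP; apply.
  + exfalso; have h := sep _ _ w1 u2; have h2 := ep_sym w u.
    exact: (negP h (etrans h2 uw)).
  + by rewrite !e2 //; apply: a2.
- by move=> v; rewrite inE => /orP[v1|v2] vP; [rewrite e1 //; apply: d1|rewrite e2 //; apply: d2].
- by move=> v; rewrite inE => /orP[v1|v2] dv; [rewrite e1 //; apply: l1|rewrite e2 //; apply: l2].
- move=> v; rewrite inE => /orP[v1|v2].
    by rewrite (porbit_agree p1 v1 e1) o1.
  by rewrite (porbit_agree p2 v2 e2) o2.
Qed.

Lemma Good_nonF (i : 'I_n) t : i < p -> well2 e (C (xs i)) (xs i) t -> Good (C (xs i)) t.
Proof.
move=> ip [_ [fp [pon adj]] [dd dw] [dn dl] po]; split=> //.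
- move=> u w uB wB uw; have iuw : ind e (C (xs i)) u w by rewrite /ind /= uB wB (ep_e uw).
  split; first exact: adj.
  by apply: dist_sub (dd _ _ iuw); apply: subsetT.
- move=> v vB vP; have [j jp vj] := inP vP; rewrite vj in vB *.
  rewrite (P_in_B ip jp vB); have h := dist_sub (subsetT _) dw.
  split; first exact: dist_mono h.
  exact: (distT_trans (distT_edge (e_x_xs i)) h).
- move=> v vB dv; case: (eqVneq v (xs i)) => [->|vx].
    by apply: dist_mono (dist_sub (subsetT _) dw).
  apply: dist_sub (subsetT _) (dl _ vB _); by rewrite -deg_B.
Qed.

Lemma Good_T z t : well2 e (C x) z t -> Good (C x) t.
Proof.
move=> [_ [fp [pon adj]] [dd dw] [dn dl] po]; split=> //.
- move=> u w uB wB uw; have iuw : ind e (C x) u w by rewrite /ind /= uB wB (ep_e uw).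
  split; first exact: adj.
  by apply: dist_sub (dd _ _ iuw); apply: subsetT.
- by move=> v vB vP; move: (P_notin_T vP); rewrite vB.
- move=> v vB dv; case: (eqVneq v x) => [vx|vx].
    by move: deg_x; rewrite -vx dv.
  apply: dist_sub (subsetT _) (dl _ vB _); by rewrite -deg_T.
Qed.


Lemma Good_model (A : {set V}) (sz : seq nat) (vt : nat * nat -> V) (pos : V -> nat * nat) :
  (size sz == 2) || (size sz == 3) -> all (fun s => 0 < s <= 3) sz ->
  (forall m, mvalid sz m -> vt m \in A) ->
  (forall v, v \in A -> mvalid sz (pos v) /\ vt (pos v) = v) ->
  (forall m, mvalid sz m -> pos (vt m) = m) ->
  (forall m1 m2, mvalid sz m1 -> mvalid sz m2 -> e (vt m1) (vt m2) ->
      m1.1 = m2.1 /\ (m1.2 = m2.2.+1 \/ m2.2 = m1.2.+1)) ->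
  (forall m, mvalid sz m -> dist_le e [set: V] x (vt m) m.2) ->
  (forall v, v \in A -> v \in P -> (pos v).2 = 1) ->
  (forall v, v \in A -> deg e [set: V] v = 1 -> (pos v).2 = nth 0 sz (pos v).1) ->
  exists s, Good A s.
Proof.
move=> szs sze H1 H2 H3 H4 H6 H7 H8.
pose f v := if v \in A then vt (mt sz (pos v)) else v.
have fA v : v \in A -> f v = vt (mt sz (pos v)) by rewrite /f => ->.
have fnA v : v \notin A -> f v = v by rewrite /f => /negbTE ->.
have fin v : v \in A -> f v \in A.
  by move=> vA; rewrite fA //; apply/H1/mt_valid => //; case: (H2 _ vA).
have finj : injective f.
  move=> u w; case: (boolP (u \in A)) => uA; case: (boolP (w \in A)) => wA.
  - rewrite !fA // => h; have [vu eu] := H2 _ uA; have [vw ew] := H2 _ wA.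
    have := congr1 pos h; rewrite !H3 ?mt_valid // => /mt_inj h2.
    by rewrite -eu -ew h2 // ?mt_valid.
  - by move=> h; move: (fin _ uA); rewrite h fnA // (negbTE wA).
  - by move=> h; move: (fin _ wA); rewrite -h fnA // (negbTE uA).
  - by rewrite !fnA.
pose s := perm finj.
have sE v : s v = f v by rewrite permE.
have dx m : mvalid sz m -> dist_le e [set: V] x (vt m) 3.
  by move=> vm; apply: dist_mono (H6 _ vm); case/andP: (mvalid_le3 sze vm).
exists s; split; first split.
- apply/subsetP => v; rewrite inE sE; apply: contraR => vA; by rewrite fnA.
- move=> v vA; rewrite sE fA //; have [vv ev] := H2 _ vA.
  apply/eqP => h; have := congr1 pos h; rewrite H3 ?mt_valid // => h'.
  by move: (mt_nfix szs sze vv); rewrite h' eqxx.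
- move=> u w uA wA uw; rewrite !sE !fA //.
  have [vu eu] := H2 _ uA; have [vw ew] := H2 _ wA.
  have mu := mt_valid szs sze vu; have mw := mt_valid szs sze vw.
  split; last first.
    have := distT_trans (distT_sym e_sym (dx _ mu)) (dx _ mw); exact: dist_mono.
  apply/negP => ee.
  have [t1 d1] := H4 _ _ mu mw ee.
  have := H4 (pos u) (pos w) vu vw; rewrite eu ew => /(_ (ep_e uw)) [t2 d2].
  case: (pos u) vu mu t1 d1 t2 d2 => tu du vu mu t1 d1 t2 d2.
  case: (pos w) vw mw t1 d1 t2 d2 => tw dw vw mw t1 d1 t2 d2.
  rewrite /= in t2 d2; subst tw.
  case: d2 => hd; subst.
  + have := mt_adj szs sze vw; rewrite /=.
    have : dw < nth 0 sz tu by case/andP: vu => _ /andP[_].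
    move=> lt /(_ lt); rewrite -t1 eqxx /=.
    by case: d1 => ->; rewrite eqxx ?orbT.
  + have := mt_adj szs sze vu; rewrite /=.
    have : du < nth 0 sz tu by case/andP: vw => _ /andP[_].
    move=> lt /(_ lt); rewrite t1 eqxx /=.
    by case: d1 => ->; rewrite eqxx ?orbT.
- move=> v vA vP; rewrite sE fA //; have [vv ev] := H2 _ vA.
  have mv := mt_valid szs sze vv.
  have h1 : dist_le e [set: V] v x 1.
    by apply: (distT_sym e_sym); rewrite -(H7 _ vA vP) -{1}ev; apply: H6.
  have h2 : dist_le e [set: V] x (vt (mt sz (pos v))) 2.
    by apply: dist_mono (H6 _ mv); apply: mt_d1 => //; apply: H7.
  split; [exact: distT_trans h1 h2 | exact: dist_mono h2].
- move=> v vA dv; rewrite sE fA //; have [vv ev] := H2 _ vA.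
  have mv := mt_valid szs sze vv.
  have h1 : dist_le e [set: V] v x (pos v).2.
    by apply: (distT_sym e_sym); rewrite -{1}ev; apply: H6.
  apply: dist_mono (distT_trans h1 (H6 _ mv)).
  by apply: mt_leaf => //; apply: H8.
- move=> v vA; have [vv ev] := H2 _ vA.
  have [k /andP[k0 k5] hk] := mt_cyc szs sze vv.
  have it : forall j, iter j s v = vt (iter j (mt sz) (pos v)) /\ mvalid sz (iter j (mt sz) (pos v)).
    elim=> [|j [IH1 IH2]] /=; first by rewrite ev.
    rewrite IH1 sE fA ?H3 ?H1 //; split=> //; exact: mt_valid.
  apply: leq_trans (porbit_le k0 _) k5.
  by rewrite (it k).1 hk ev.
Qed.


Definition v2 (i : 'I_n) := odflt (xs i) [pick w in C (xs i) | e (xs i) w].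
Definition v3 (i : 'I_n) := odflt (xs i) [pick w in C (xs i) | (w != xs i) && (w != v2 i)].

Lemma first_step (S : {set V}) u w : is_tree e S -> u \in S -> w \in S -> u != w ->
  exists2 y, y \in S & e u y.
Proof.
case/and3P=> _ /forallP /(_ u) /implyP h _ uS wS uw.
move: (h uS) => /forallP /(_ w) /implyP /(_ wS) /connectP [[|y s] ps lw].
  by rewrite lw eqxx in uw.
by move: ps => /= /andP[/and3P[_ yS euy] _]; exists y.
Qed.

Lemma Fcases (i : 'I_n) : i < p -> nbrF e (xs i) x ->
  [\/ C (xs i) = [set xs i] /\ #|C (xs i)| = 1,
      [/\ C (xs i) = [set xs i; v2 i], #|C (xs i)| = 2, e (xs i) (v2 i) & xs i != v2 i] |
      [/\ C (xs i) = [set xs i; v2 i; v3 i], #|C (xs i)| = 3,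
          [/\ e (xs i) (v2 i), e (v2 i) (v3 i) & ~~ e (xs i) (v3 i)] &
          [/\ xs i != v2 i, v2 i != v3 i & xs i != v3 i]]].
Proof.
move=> ip; rewrite /nbrF B_eq // => /and3P[/andP[tr _] c3 d3].
set S := C (xs i) in tr c3 d3 *.
have xS : xs i \in S by apply: C_self.
have c1 : 0 < #|S| by apply/card_gt0P; exists (xs i).
have [c11|c2] := boolP (#|S| == 1).
  constructor 1; split; last exact/eqP.
  apply/eqP; rewrite eq_sym eqEcard cards1 (eqP c11) andbT.
  by apply/subsetP => w; rewrite inE => /eqP ->.
have c22 : 1 < #|S| by rewrite ltn_neqAle eq_sym c2 c1.
have [w wS wx] : exists2 w, w \in S & w != xs i.
  move: c22; rewrite (cardsD1 (xs i)) xS add1n ltnS => /card_gt0P [w].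
  by rewrite in_setD1 => /andP[wx wS]; exists w.
have [e2 v2S] : e (xs i) (v2 i) /\ v2 i \in S.
  rewrite /v2; case: pickP => [y /andP[yS ey] //|H].
  have wx' : xs i != w by rewrite eq_sym.
  have [y yS ey] := first_step tr xS wS wx'.
  by move: (H y); rewrite yS ey.
have n12 : xs i != v2 i by apply/eqP => h; move: e2; rewrite -h e_irr.
have [c22'|c3'] := boolP (#|S| == 2).
  constructor 2; split=> //; last exact/eqP.
  apply/eqP; rewrite eq_sym eqEcard cards2 n12 (eqP c22') leqnn andbT.
  by apply/subsetP => y /set2P [] ->.
have c33 : #|S| = 3 by apply/eqP; rewrite eqn_leq c3 ltn_neqAle eq_sym c3' c22.
have [v3S n13 n23] : [/\ v3 i \in S, v3 i != xs i & v3 i != v2 i].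
  rewrite /v3; case: pickP => [y /and3P[yS y1 y2] //|H].
  have : ~~ (S \subset [set xs i; v2 i]).
    by apply/negP => /subset_leq_card; rewrite cards2 n12 c33.
  case/subsetPn => y yS; rewrite !inE negb_or => /andP[y1 y2].
  by move: (H y); rewrite yS y1 y2.
have Seq : S = [set xs i; v2 i; v3 i].
  apply/eqP; rewrite eq_sym eqEcard c33 andbC.
  rewrite setUC cardsU1 cards2 !inE negb_or n13 n23 n12 /=.
  by apply/subsetP => y /setUP [/set1P ->|/set2P [] ->].
have ne13 : ~~ e (xs i) (v3 i).
  apply/negP => e3; move: d3; rewrite c33 eqxx /= /deg.
  have : [set v2 i; v3 i] \subset [set w0 in S | e (xs i) w0].
    by apply/subsetP => y /set2P [] ->; rewrite inE ?v2S ?v3S ?e2 ?e3.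
  by move/subset_leq_card; rewrite cards2 eq_sym n23 => /leq_trans H /H.
have e23 : e (v2 i) (v3 i).
  have [y yS ey] := first_step tr v3S xS n13.
  move: yS; rewrite Seq => /setUP [/set2P [] yv| /set1P yv].
  - by move: ne13; rewrite -yv e_sym ey.
  - by rewrite e_sym -yv.
  - by move: ey; rewrite yv e_irr.
constructor 3; split=> //; split=> //; first by rewrite eq_sym.
by rewrite eq_sym.
Qed.


Definition vert (i : 'I_n) d := if d == 1 then xs i else if d == 2 then v2 i else v3 i.
Definition dep (i : 'I_n) v := if v == xs i then 1 else if v == v2 i then 2 else 3.

Lemma deg2 a b c : b != c -> e a b -> e a c -> deg e [set: V] a = 1 -> False.
Proof.
move=> bc ab ac; rewrite /deg => h.
have : [set b; c] \subset [set w in [set: V] | e a w].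
  by apply/subsetP => y /set2P [] ->; rewrite !inE ?ab ?ac.
by move/subset_leq_card; rewrite cards2 bc h.
Qed.

Ltac fcase ip Fi := case: (Fcases ip Fi) =>
  [[-> ->]|[-> -> e12 n12]|[-> -> [e12 e23 ne13] [n12 n23 n13]]].

Section FV.
Variable i : 'I_n.
Hypothesis ip : i < p.
Hypothesis Fi : nbrF e (xs i) x.

Lemma FV1 d : 0 < d <= #|C (xs i)| -> vert i d \in C (xs i).
Proof.
fcase ip Fi; case: d => [|[|[|[|d]]]] //= _; rewrite /vert /= !inE ?eqxx ?orbT //.
Qed.

Lemma FV2 v : v \in C (xs i) -> 0 < dep i v <= #|C (xs i)| /\ vert i (dep i v) = v.
Proof.
rewrite /dep /vert; fcase ip Fi.
- by move/set1P ->; rewrite eqxx.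
- move/set2P => [] ->; rewrite ?eqxx //; by rewrite eq_sym (negbTE n12) eqxx.
- move/setUP => [/set2P [] ->|/set1P ->]; rewrite ?eqxx //.
  + by rewrite eq_sym (negbTE n12) eqxx.
  + by rewrite eq_sym (negbTE n13) eq_sym (negbTE n23).
Qed.

Lemma FV3 d : 0 < d <= #|C (xs i)| -> dep i (vert i d) = d.
Proof.
rewrite /dep /vert; fcase ip Fi; case: d => [|[|[|[|d]]]] //= _; rewrite ?eqxx //.
- by rewrite eq_sym (negbTE n12).
- by rewrite eq_sym (negbTE n12).
- by rewrite eq_sym (negbTE n13) eq_sym (negbTE n23).
Qed.

Lemma FV4 d1 d2 : 0 < d1 <= #|C (xs i)| -> 0 < d2 <= #|C (xs i)| ->
  e (vert i d1) (vert i d2) -> d1 = d2.+1 \/ d2 = d1.+1.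
Proof.
rewrite /vert; fcase ip Fi; case: d1 => [|[|[|[|d1]]]] //= _;
  case: d2 => [|[|[|[|d2]]]] //= _; rewrite ?e_irr //; try by [left|right].
- by rewrite (negbTE ne13).
- by rewrite e_sym (negbTE ne13).
Qed.

Lemma FV6 d : 0 < d <= #|C (xs i)| -> dist_le e [set: V] x (vert i d) d.
Proof.
have h1 := distT_edge (e_x_xs i).
rewrite /vert; fcase ip Fi; case: d => [|[|[|[|d]]]] //= _.
- have h2 := distT_trans h1 (distT_edge e12); exact: h2.
- have h2 := distT_trans h1 (distT_edge e12); exact: h2.
- exact: (distT_trans (distT_trans h1 (distT_edge e12)) (distT_edge e23)).
Qed.

Lemma FV7 v : v \in C (xs i) -> v \in P -> dep i v = 1.
Proof.
move=> vC /inP [j jp vj]; rewrite vj in vC *.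
by rewrite (P_in_B ip jp vC) /dep eqxx.
Qed.

Lemma FV8 v : v \in C (xs i) -> deg e [set: V] v = 1 -> dep i v = #|C (xs i)|.
Proof.
have exi : e (xs i) x by rewrite e_sym e_x_xs.
move: (x_notin_B ip); case: (Fcases ip Fi) =>
  [[S1 c1]|[S2 c2 e12 n12]|[S3 c3 [e12 e23 ne13] [n12 n23 n13]]];
  rewrite /dep ?c1 ?c2 ?c3 ?S1 ?S2 ?S3 => xnB.
- by move/set1P ->; rewrite eqxx.
- have xv2 : x != v2 i by apply: contra xnB => /eqP ->; rewrite !inE eqxx orbT.
  move/set2P => [] -> dv; rewrite ?eqxx.
  + by exfalso; apply: (deg2 xv2 exi e12 dv).
  + by rewrite eq_sym (negbTE n12).
- have xv2 : x != v2 i by apply: contra xnB => /eqP ->; rewrite !inE eqxx !orbT.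
  move/setUP => [/set2P [] ->|/set1P ->] dv; rewrite ?eqxx.
  + by exfalso; apply: (deg2 xv2 exi e12 dv).
  + by exfalso; rewrite e_sym in e12; apply: (deg2 n13 e12 e23 dv).
  + by rewrite eq_sym (negbTE n13) eq_sym (negbTE n23).
Qed.

End FV.


Lemma Fsize (i : 'I_n) : i < p -> nbrF e (xs i) x -> 0 < #|C (xs i)| <= 3.
Proof. by move=> ip Fi; case: (Fcases ip Fi) => [[_ ->]|[_ -> _ _]|[_ -> _ _]]. Qed.

Lemma Good_group (g : seq 'I_n) : uniq g -> all (fun i : 'I_n => (i < p) && nbrF e (xs i) x) g ->
  (size g == 2) || (size g == 3) -> exists s, Good (\bigcup_(i <- g) C (xs i)) s.
Proof.
move=> ug allF szg.
pose o0 : 'I_n := Ordinal (ltnW n_ge2).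
pose gi t := nth o0 g t.
have gF t : t < size g -> gi t < p /\ nbrF e (xs (gi t)) x.
  by move=> tg; move/allP: allF => /(_ (gi t) (mem_nth o0 tg)) /andP[].
pose sz := [seq #|C (xs i)| | i <- g].
have nsz t : t < size g -> nth 0 sz t = #|C (xs (gi t))|.
  by move=> tg; rewrite /sz (nth_map o0).
pose tv v := find (fun i => v \in C (xs i)) g.
pose pos v := (tv v, dep (gi (tv v)) v).
pose vt (m : nat * nat) := vert (gi m.1) m.2.
set A := \bigcup_(i <- g) C (xs i).
have memA v : (v \in A) = has (fun i => v \in C (xs i)) g.
  rewrite /A bigcup_seq; apply/bigcupP/hasP => [[i ig vi]|[i ig vi]]; by exists i.
have validE m : mvalid sz m = (m.1 < size g) && (0 < m.2 <= #|C (xs (gi m.1))|).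
  rewrite /mvalid size_map; case: (ltnP m.1 (size g)) => // tg; by rewrite nsz.
have gi_inj t1 t2 : t1 < size g -> t2 < size g -> gi t1 = gi t2 -> t1 = t2.
  by move=> h1 h2 h; apply/eqP; rewrite -(nth_uniq o0 h1 h2 ug); apply/eqP.
have tvP v : v \in A -> tv v < size g /\ v \in C (xs (gi (tv v))).
  rewrite memA => h; split; first by rewrite -has_find.
  exact: (nth_find o0 h).
apply: (@Good_model A sz vt pos).
- by rewrite size_map.
- apply/allP => s0 /mapP [i ig ->].
  by move/allP: allF => /(_ i ig) /andP[ip Fi]; apply: Fsize.
- move=> [t d]; rewrite validE /= => /andP[tg dd].
  rewrite memA; apply/hasP; exists (gi t); first exact: mem_nth.
  by have [ip Fi] := gF t tg; apply: FV1.
- move=> v vA; have [tg vC] := tvP v vA; have [ip Fi] := gF _ tg.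
  have [h1 h2] := FV2 ip Fi vC.
  by rewrite validE /= tg h1.
- move=> [t d]; rewrite validE /= => /andP[tg dd].
  have [ip Fi] := gF t tg.
  have wC := FV1 ip Fi dd.
  have wA : vert (gi t) d \in A by rewrite memA; apply/hasP; exists (gi t); rewrite ?mem_nth.
  have [tg' wC'] := tvP _ wA; have [ip' _] := gF _ tg'.
  have et : tv (vert (gi t) d) = t.
    by apply: gi_inj => //; apply: (C_xs_inj ip' ip wC' wC).
  by rewrite /pos /vt /= et FV3.
- move=> [t1 d1] [t2 d2]; rewrite !validE /= => /andP[t1g dd1] /andP[t2g dd2] ee.
  have [ip1 F1] := gF _ t1g; have [ip2 F2] := gF _ t2g.
  have et := gi_inj _ _ t1g t2g (edge_BB ip1 ip2 (FV1 ip1 F1 dd1) (FV1 ip2 F2 dd2) ee).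
  subst t2; split=> //; exact: (FV4 ip1 F1 dd1 dd2 ee).
- move=> [t d]; rewrite validE /= => /andP[tg dd].
  have [ip Fi] := gF t tg; exact: FV6.
- move=> v vA vP; have [tg vC] := tvP v vA; have [ip Fi] := gF _ tg.
  by rewrite /pos /= (FV7 ip vC vP).
- move=> v vA dv; have [tg vC] := tvP v vA; have [ip Fi] := gF _ tg.
  by rewrite /= nsz // (FV8 ip Fi vC dv).
Qed.


Lemma mulA1 (A1 A2 : {set V}) (s1 s2 : {perm V}) v : perm_on A1 s1 -> perm_on A2 s2 ->
  A1 :&: A2 = set0 -> v \in A1 -> (s1 * s2)%g v = s1 v.
Proof.
move=> p1 p2 dis v1; rewrite permM (out_perm p2) //; apply/negP => h.
by move/setP: dis => /(_ (s1 v)); rewrite !inE h perm_closed // v1.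
Qed.

Lemma bigcupC (s : seq 'I_n) v : (v \in \bigcup_(i <- s) C (xs i)) = has (fun i => v \in C (xs i)) s.
Proof. rewrite bigcup_seq; apply/bigcupP/hasP => [[i ig vi]|[i ig vi]]; by exists i. Qed.

Lemma sep_lists (s1 s2 : seq 'I_n) : uniq (s1 ++ s2) -> all (fun i : 'I_n => i < p) (s1 ++ s2) ->
  (\bigcup_(i <- s1) C (xs i)) :&: (\bigcup_(i <- s2) C (xs i)) = set0 /\
  (forall u w, u \in \bigcup_(i <- s1) C (xs i) -> w \in \bigcup_(i <- s2) C (xs i) -> ~~ ep u w).
Proof.
rewrite cat_uniq all_cat => /and3P[_ nh _] /andP[/allP a1 /allP a2].
have key u w (i j : 'I_n) : i \in s1 -> j \in s2 -> u \in C (xs i) -> w \in C (xs j) ->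
    w \in C (xs i) -> False.
  move=> is1 js2 ui wj wi.
  have eij := C_xs_inj (a1 _ is1) (a2 _ js2) wi wj; subst j.
  by move: nh => /hasPn /(_ _ js2); rewrite is1.
split.
  apply/setP => v; rewrite !inE !bigcupC; apply/negP => /andP[/hasP [i is1 vi] /hasP [j js2 vj]].
  exact: (key v v i j).
move=> u w; rewrite !bigcupC => /hasP [i is1 ui] /hasP [j js2 wj]; apply/negP => uw.
exact: (key u w i j is1 js2 ui wj (C_closed ui uw)).
Qed.

Lemma sepT (s : seq 'I_n) : all (fun i : 'I_n => i < p) s ->
  C x :&: (\bigcup_(i <- s) C (xs i)) = set0 /\
  (forall u w, u \in C x -> w \in \bigcup_(i <- s) C (xs i) -> ~~ ep u w).
Proof.
move=> /allP a; split.
  apply/setP => v; rewrite in_setI bigcupC in_set0; apply/negP => /andP[vx /hasP [i iS vi]].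
  by move: (C_x_xs (a _ iS) vi); rewrite vx.
move=> u w ux; rewrite bigcupC => /hasP [i iS wi]; apply/negP => uw.
by move: (C_x_xs (a _ iS) wi); rewrite (C_closed ux uw).
Qed.

Lemma Good_Flist (s : seq 'I_n) : uniq s -> all (fun i : 'I_n => (i < p) && nbrF e (xs i) x) s ->
  2 <= size s -> exists t, Good (\bigcup_(i <- s) C (xs i)) t.
Proof.
have [m] := ubnP (size s); elim: m s => // m IH [|a [|b r]] //= szm ur alls _.
have [r01|r2] := leqP (size r) 1.
  apply: Good_group => //=; by case: r {szm ur alls} r01 => [|c [|d r]].
rewrite -[a :: b :: r]/([:: a; b] ++ r) big_cat.
have ur' : uniq r by move: ur => /= /andP[_ /andP[]].
have u2 : uniq [:: a; b].
  by move: ur => /= /andP[]; rewrite !inE negb_or => /andP[-> _] _.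
have a2 : all (fun i : 'I_n => (i < p) && nbrF e (xs i) x) [:: a; b].
  by move: alls => /= /and3P[-> -> _].
have ar : all (fun i : 'I_n => (i < p) && nbrF e (xs i) x) r by move: alls => /= /and3P[_ _ ->].
have [t1 g1] := @Good_group [:: a; b] u2 a2 (erefl _).
have szr : size r < m by move: szm => /=; lia.
have [t2 g2] := IH r szr ur' ar r2.
have ap : all (fun i : 'I_n => i < p) ([:: a; b] ++ r).
  rewrite all_cat; apply/andP; split; [apply: sub_all a2 | apply: sub_all ar]; by move=> i /andP[].
have [dis sep] := @sep_lists [:: a; b] r ur ap.
exists (t1 * t2)%g; exact: Good_comb dis sep g1 g2.
Qed.

Hypothesis other_well : forall i : 'I_n, i < p -> ~~ nbrF e (xs i) x ->
      exists s : {perm V}, well2 e (branch e (xs i) x) (xs i) s.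

Lemma Good_Nlist (s : seq 'I_n) : uniq s -> all (fun i : 'I_n => (i < p) && ~~ nbrF e (xs i) x) s ->
  exists t, Good (\bigcup_(i <- s) C (xs i)) t.
Proof.
elim: s => [|a r IH] /=; first by move=> _ _; exists 1%g; rewrite big_nil; apply: Good0.
move=> /andP[ar ur] /andP[/andP[ap Fa] alr].
have [t1 w1] := other_well ap Fa; rewrite B_eq // in w1.
have g1 := Good_nonF ap w1.
have [t2 g2] := IH ur alr.
have u1 : uniq ([:: a] ++ r) by rewrite /= ar ur.
have ap1 : all (fun i : 'I_n => i < p) ([:: a] ++ r).
  by rewrite /= ap; apply/allP => i /(allP alr) /andP[].
have [dis sep] := @sep_lists [:: a] r u1 ap1.
rewrite big_seq1 in dis sep.
exists (t1 * t2)%g; rewrite big_cons; exact: Good_comb dis sep g1 g2.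
Qed.


Hypothesis F2 : 2 <= #|[set i : 'I_n | (i < p) && nbrF e (xs i) x]| <= p.-1.
Hypothesis T_nonstar : nonstar_tree e [set: V].
Variable z : V.
Variable s' : {perm V}.
Hypothesis s'_well : well2 e (cut_comp e x P) z s'.
Hypothesis s'_x : dist_le e (cut_comp e x P) x (s' x) 3.

Lemma main_sec : exists s : {perm V}, well2 e [set: V] z s /\
    {in cut_comp e x P, forall v, s v = s' v}.
Proof.
have s'w := s'_well; have s'x := s'_x; rewrite Tp_eq in s'w s'x *.
have gT := Good_T s'w.
set lF := enum [set i : 'I_n | (i < p) && nbrF e (xs i) x].
set lN := enum [set i : 'I_n | (i < p) && ~~ nbrF e (xs i) x].
have aF : all (fun i : 'I_n => (i < p) && nbrF e (xs i) x) lF.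
  by apply/allP => i; rewrite mem_enum inE.
have aN : all (fun i : 'I_n => (i < p) && ~~ nbrF e (xs i) x) lN.
  by apply/allP => i; rewrite mem_enum inE.
have szF : 2 <= size lF by rewrite /lF -cardE; case/andP: F2.
have [tF gF] := Good_Flist (enum_uniq _) aF szF.
have [tN gN] := Good_Nlist (enum_uniq _) aN.
have uFN : uniq (lF ++ lN).
  rewrite cat_uniq !enum_uniq /= andbT; apply/hasPn => i.
  by rewrite !mem_enum !inE => /andP[_ /negbTE ->]; rewrite andbF.
have aFN : all (fun i : 'I_n => i < p) (lF ++ lN).
  rewrite all_cat; apply/andP; split; [apply: sub_all aF | apply: sub_all aN]; by move=> i /andP[].
have [dis1 sep1] := sep_lists uFN aFN.
have gU := Good_comb dis1 sep1 gF gN.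
rewrite -big_cat in gU.
have [dis2 sep2] := sepT aFN.
have gA := Good_comb dis2 sep2 gT gU.
set U := \bigcup_(i <- lF ++ lN) C (xs i) in gU dis2 sep2 gA.
set t := (tF * tN)%g in gU gA.
set sg := (s' * t)%g in gA *.
have Aall : C x :|: U = [set: V].
  apply/setP => v; rewrite in_setT in_setU; case: (part_cover v) => [-> //|[i ip vi]].
  apply/orP; right; rewrite /U bigcupC; apply/hasP; exists i => //.
  by rewrite mem_cat !mem_enum !inE ip /=; case: (nbrF _ _ _).
rewrite Aall in gA.
have [[pA fA] aA dA lA oA] := gA.
have [[pT fT] _ _ _ _] := gT.
have [[pU _] _ dU _ _] := gU.
have sgT v : v \in C x -> sg v = s' v by move=> vx; apply: (mulA1 pT pU dis2 vx).
have xT : x \in C x by apply: C_self.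
have [[_ zT] [_ [_ adjT]] [dT dzT] [dnT _] _] := s'w.
have PU v : v \in P -> v \in U.
  move=> vP; have := in_setT v; rewrite -Aall inE => /orP[vT|//].
  by move: (P_notin_T vP); rewrite vT.
have cross b : b \in P -> ~~ e (sg x) (sg b) /\ dist_le e [set: V] (sg x) (sg b) 6.
  move=> bP; have bU := PU _ bP.
  have sbU : sg b \in U.
    rewrite /sg permM (out_perm pT); first by rewrite perm_closed.
    by apply/negP => bT; move: (P_notin_T bP); rewrite bT.
  have sbT : sg b \notin C x.
    by apply/negP => h; move/setP: dis2 => /(_ (sg b)); rewrite in_setI in_set0 h sbU.
  split.
    apply/negP => ee; have sxT : sg x \in C x by rewrite sgT // perm_closed.
    have [h _] := edge_T sxT sbT ee.
    by move: (fT x xT); rewrite -sgT // h eqxx.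
  have h1 : dist_le e [set: V] (sg x) x 3.
    rewrite sgT //; apply: (distT_sym e_sym); exact: dist_sub (subsetT _) s'x.
  have [_ h2] := dA b (in_setT b) bP.
  exact: distT_trans h1 h2.
have edges a b : e a b -> ~~ e (sg a) (sg b) /\ dist_le e [set: V] (sg a) (sg b) 6.
  move=> eab; case epab : (ep a b); first by apply: aA; rewrite ?in_setT.
  have := nep eab (negbT epab) => /orP[] /andP[/eqP ax bP].
    by rewrite ax; apply: cross.
  rewrite ax e_sym; have [h1 h2] := cross _ bP; split=> //.
  exact: (distT_sym e_sym).
exists sg; split; last by move=> v vx; apply: sgT.
split.
- by split=> //; rewrite in_setT.
- split; first by move=> v _; apply: fA; rewrite in_setT.
  split; first by apply/subsetP => v; rewrite in_setT.
  by move=> a b; rewrite indT => /edges [].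
- split.
    by move=> a b; rewrite indT => /edges [].
  rewrite sgT //; exact: dist_sub (subsetT _) dzT.
- split.
    move=> y; rewrite indT => ezy.
    case epzy : (ep z y).
      have yT := C_closed zT epzy.
      rewrite sgT //; apply: dist_sub (subsetT _) (dnT _ _).
      by rewrite /ind /= zT yT ezy.
    have := nep ezy (negbT epzy) => /orP[] /andP[/eqP zx yP].
      by have [h _] := dA y (in_setT y) yP.
    by move: (P_notin_T yP); rewrite zT.
  by move=> y _ dy; apply: lA; rewrite ?in_setT.
- by move=> v _; apply: oA; rewrite in_setT.
Qed.

End Main.

Theorem lemma3p5 (V : finType) (e : rel V)
  (e_sym : symmetric e) (e_irr : irreflexive e)
  (T_nonstar : nonstar_tree e [set: V])
  (x : V) (n : nat) (xs : 'I_n -> V)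
  (xs_inj : injective xs)
  (xs_nbr : forall v, e x v <-> exists i, xs i = v)
  (n_ge4 : 4 <= n) (p : nat) (p_ge3 : 3 <= p) (p_ltn : p < n)
  (F2 : 2 <= #|[set i : 'I_n | (i < p) && nbrF e (xs i) x]| <= p.-1)
  (other_well : forall i : 'I_n, i < p -> ~~ nbrF e (xs i) x ->
      exists s : {perm V}, well2 e (branch e (xs i) x) (xs i) s)
  (z : V) (s' : {perm V})
  (s'_well : well2 e (cut_comp e x [set xs i | i : 'I_n & i < p]) z s')
  (s'_x : dist_le e (cut_comp e x [set xs i | i : 'I_n & i < p]) x (s' x) 3) :
  exists s : {perm V}, well2 e [set: V] z s /\
    {in cut_comp e x [set xs i | i : 'I_n & i < p], forall v, s v = s' v}.
Proof.
have T_tree : is_tree e [set: V] by case/andP: T_nonstar.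
have n_ge2 : 2 <= n by apply: leq_trans n_ge4.
exact: (@main_sec V e e_sym e_irr T_tree x n xs xs_inj xs_nbr p n_ge2 other_well F2 T_nonstar z s' s'_well s'_x).
Qed.
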